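(* The nested commutator $[\Delta_1^6,[\Delta_2^6,[\Delta_3^6,[\Delta_4^6,\Delta_5^6]]]]$ (where $[a,b]=aba^{-1}b^{-1}$) is a nontrivial element of $Br(\Sigma_2)\cap\ker(\rho)$: it lies in $Br(\Sigma_2)$, acts trivially on $H_1(\Sigma_2;\mathbb{Z}_3)$, and acts nontrivially on $H_1(\Sigma_2;\mathbb{Z})$.
   Context: $\Sigma_2$ is the closed orientable genus two surface with hyperelliptic involution $i$ and 2-fold branched covering $\pi\colon\Sigma_2\to S^2$ branched over $y_1,\dots,y_6$. $\Delta_1,\dots,\Delta_5$ are the standard generating Dehn twists of $M(\Sigma_2)$ along a chain of $i$-invariant simple closed curves $c_1,\dots,c_5$ (consecutive curves meeting once, non-consecutive disjoint), where $c_j$ projects to an arc joining $y_j$ and $y_{j+1}$; under the Birman–Hilden surjection $p\colon M(\Sigma_2)\to M(S^2,6)$ (kernel $\langle[i]\rangle$), $p(\Delta_j)=\sigma_j$, the half-twist exchanging $y_j$ and $y_{j+1}$. $M_p(S^2,n)$ is the group of isotopy classes fixing each marked point, $L_i$ the map forgetting $y_i$, $Br(S^2,6)=\bigcap_i\ker L_i$, $Br(\Sigma_2)=p^{-1}(Br(S^2,6))$, and $\rho\colon M(\Sigma_2)\to Sp(4,\mathbb{Z}_3)$ the action on $H_1(\Sigma_2;\mathbb{Z}_3)$. *)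

(* Defs.v *)
From mathcomp Require Import all_boot all_order all_algebra.
Set Implicit Arguments. Unset Strict Implicit. Unset Printing Implicit Defensive.
Import GRing.Theory.
Local Open Scope ring_scope.

(* Groups given by presentations.  A letter (j, false) is the generator j,  *)
(* (j, true) its inverse.  Words are read left to right as products        *)
(* (functional composition: the rightmost letter acts first).              *)
Definition letter (k : nat) := ('I_k * bool)%type.
Definition word (k : nat) := seq (letter k).

Definition inv_letter k (x : letter k) : letter k := (x.1, ~~ x.2).
Definition inv_word k (w : word k) : word k := rev (map (@inv_letter k) w).
Definition gen k (j : 'I_k) : word k := [:: (j, false)].
Definition pow_word k (w : word k) (n : nat) : word k := flatten (nseq n w).
Definition comm_word k (a b : word k) : word k :=
  a ++ b ++ inv_word a ++ inv_word b.

(* equality in the group < generators 'I_k | R >  (R a list of relations l = r) *)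
Inductive pres_eq (k : nat) (R : seq (word k * word k)) : word k -> word k -> Prop :=
| pe_refl w : pres_eq R w w
| pe_sym u v : pres_eq R u v -> pres_eq R v u
| pe_trans u v w : pres_eq R u v -> pres_eq R v w -> pres_eq R u w
| pe_free u v x : pres_eq R (u ++ x :: inv_letter x :: v) (u ++ v)
| pe_rel u v l r : (l, r) \in R -> pres_eq R (u ++ l ++ v) (u ++ r ++ v).

(* M(S^2, m+2): mapping class group of the sphere with m+2 marked points,  *)
(* generated by the half-twists sigma_1..sigma_{m+1} (here indexed by      *)
(* 'I_m.+1), with its standard presentation: braid relations,              *)
(* sigma_1...sigma_{m+1} sigma_{m+1}...sigma_1 = 1 and                     *)
(* (sigma_1 ... sigma_{m+1})^(m+2) = 1.                                   *)
(* the ordinals 0, 1, ..., n-1 in increasing order (computable variant of enum) *)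
Fixpoint ords (n : nat) : seq 'I_n :=
  match n with
  | 0 => [::]
  | n'.+1 => ord0 :: map (lift ord0) (ords n')
  end.

Definition chain_word (m : nat) : word m.+1 := [seq (j, false) | j <- ords m.+1].

Definition braid_rels (m : nat) : seq (word m.+1 * word m.+1) :=
  flatten [seq [seq ([:: (i, false); (j, false); (i, false)],
                     [:: (j, false); (i, false); (j, false)])
               | j <- ords m.+1 & (val j == (val i).+1)%N]
          | i <- ords m.+1]
  ++
  flatten [seq [seq ([:: (i, false); (j, false)], [:: (j, false); (i, false)])
               | j <- ords m.+1 & ((val i).+1 < val j)%N]
          | i <- ords m.+1].

Definition sphere_rels (m : nat) : seq (word m.+1 * word m.+1) :=
  braid_rels m ++
  [:: (chain_word m ++ rev (chain_word m), [::]);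
      (pow_word (chain_word m) m.+2%N, [::])].

Definition trivial_sphere (m : nat) (w : word m.+1) : Prop :=
  pres_eq (sphere_rels m) w [::].

(* M(Sigma_2): generated by Delta_1..Delta_5 (indexed by 'I_5), with the    *)
(* Birman-Hilden presentation (recorded for reference).                    *)
Definition Hword : word 5 := chain_word 4 ++ rev (chain_word 4).
Definition genus2_rels : seq (word 5 * word 5) :=
  braid_rels 4 ++
  [:: (pow_word (chain_word 4) 6%N, [::]); (pow_word Hword 2%N, [::])] ++
  [seq (Hword ++ gen j, gen j ++ Hword) | j <- ords 5].

(* Birman-Hilden map p : M(Sigma_2) -> M(S^2,6), Delta_j |-> sigma_j, on words. *)
Definition p_word (w : word 5) : word 5 := w.

(* sigma_j (0-indexed j) exchanges the marked points in positions j, j+1.   *)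
Fixpoint track (pos : nat) (w : word 5) : nat :=
  match w with
  | [::] => pos
  | (j, _) :: w' =>
      track (if pos == val j then (val j).+1
             else if pos == (val j).+1 then val j else pos) w'
  end.

Definition pure6 (w : word 5) : Prop := forall i : 'I_6, track i w = i.

(* L_i on words: delete the strand starting (and, for pure words, ending)   *)
(* at the marked point in position pos, renumbering the remaining points.   *)
(* the element min(k,3) of 'I_4 (computable) *)
Definition ord4 (k : nat) : 'I_4 :=
  match k with
  | 0 => @Ordinal 4 0 isT
  | 1 => @Ordinal 4 1 isT
  | 2 => @Ordinal 4 2 isT
  | _ => @Ordinal 4 3 isT
  end.

Fixpoint forget_aux (pos : nat) (w : word 5) : word 4 :=
  match w with
  | [::] => [::]
  | (j, b) :: w' =>
      if pos == val j then forget_aux (val j).+1 w'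
      else if pos == (val j).+1 then forget_aux (val j) w'
      else (ord4 (if (val j < pos)%N then val j else (val j).-1), b)
             :: forget_aux pos w'
  end.
Definition L (i : 'I_6) (w : word 5) : word 4 := forget_aux i w.

(* Br(S^2,6) = intersection of the kernels of the L_i (inside M_p(S^2,6)). *)
Definition in_Br_S2_6 (w : word 5) : Prop :=
  pure6 w /\ forall i : 'I_6, @trivial_sphere 3%N (L i w).

Definition in_Br_Sigma2 (w : word 5) : Prop := in_Br_S2_6 (p_word w).

(* Action on H_1(Sigma_2; Z) = Z^4, symplectic basis (a1,b1,a2,b2) with     *)
(* <a_i,b_i> = 1.  Homology classes of the chain c_1..c_5:                  *)
(* c1 = b1, c2 = a1, c3 = b1 - b2, c4 = a2, c5 = b2.                        *)
(* A Dehn twist about c acts by the transvection x |-> x + <x,c> c          *)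
(* (Picard-Lefschetz formula), on column vectors.                           *)
Definition Jform : 'M[int]_4 :=
  \matrix_(i < 4, j < 4)
    (if ((val i == 0) && (val j == 1))%N || ((val i == 2) && (val j == 3))%N then 1
     else if ((val i == 1) && (val j == 0))%N || ((val i == 3) && (val j == 2))%N then -1
     else 0).

Definition chain_class (j : 'I_5) : 'cV[int]_4 :=
  \col_(i < 4)
    (match val j, val i with
     | 0%N, 1%N => 1
     | 1%N, 0%N => 1
     | 2%N, 1%N => 1
     | 2%N, 3%N => -1
     | 3%N, 2%N => 1
     | 4%N, 3%N => 1
     | _, _ => 0
     end : int).

(* <x, c> = x^T J c ;                                                      *)
(* T_c x = x + (x^T J c) c = x + c (c^T J^T x).                            *)
Definition transvection (c : 'cV[int]_4) : 'M[int]_4 :=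
  1%:M + c *m (c^T *m Jform^T).
Definition transvection_inv (c : 'cV[int]_4) : 'M[int]_4 :=
  1%:M - c *m (c^T *m Jform^T).

Definition rho_letter (x : letter 5) : 'M[int]_4 :=
  if x.2 then transvection_inv (chain_class x.1) else transvection (chain_class x.1).

Definition rhoZ (w : word 5) : 'M[int]_4 :=
  foldr (fun x M => rho_letter x *m M) 1%:M w.

Definition rho3 (w : word 5) : 'M['Z_3]_4 :=
  map_mx (fun z : int => z%:~R) (rhoZ w).

Definition D6 (j : 'I_5) : word 5 := pow_word (gen j) 6%N.
Definition nested_comm : word 5 :=
  comm_word (D6 (@Ordinal 5 0 isT)) (comm_word (D6 (@Ordinal 5 1 isT))
    (comm_word (D6 (@Ordinal 5 2 isT))
      (comm_word (D6 (@Ordinal 5 3 isT)) (D6 (@Ordinal 5 4 isT))))).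

(* Main.v *)
Require Import Defs.
From Stdlib Require Import ZArith.
From mathcomp Require Import all_boot all_order all_algebra.
From mathcomp Require Import ssrZ.
Import GRing.Theory.
Local Open Scope ring_scope.

Section Free.
Variable (k : nat) (R : seq (word k * word k)).

Lemma pres_cons x u v : pres_eq R u v -> pres_eq R (x :: u) (x :: v).
Proof.
elim => [w|u' v' _ IH|u' v' w' _ IH1 _ IH2|u' v' y|u' v' l r H].
- exact: pe_refl.
- exact: pe_sym.
- exact: (pe_trans IH1 IH2).
- exact: (pe_free R (x :: u') v' y).
- exact: (pe_rel (x :: u') v' H).
Qed.

Fixpoint cancel1 (w : word k) : option (word k) :=
  match w with
  | x :: ((y :: w'') as w') =>
      if y == inv_letter x then Some w'' else omap (cons x) (cancel1 w')
  | _ => None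
  end.

Lemma cancel1_ok w w' : cancel1 w = Some w' -> pres_eq R w w'.
Proof.
elim: w w' => [|x w IH] w' //=.
case: w IH => [|y w] IH //.
case: eqP => [-> [<-]|_]; first exact: (pe_free R [::] w x).
case E: (cancel1 (y :: w)) => [r|] //= [<-].
by apply: pres_cons; apply: IH.
Qed.

Fixpoint reduce (n : nat) (w : word k) : word k :=
  match n with
  | 0 => w
  | n'.+1 => match cancel1 w with Some w' => reduce n' w' | None => w end
  end.

Lemma reduce_ok n w : pres_eq R w (reduce n w).
Proof.
elim: n w => [|n IH] w /=; first exact: pe_refl.
case E: (cancel1 w) => [w'|]; last exact: pe_refl.
exact: (pe_trans (@cancel1_ok _ _ E) (IH _)).
Qed.

Lemma reduce_triv n w : reduce n w = [::] -> pres_eq R w [::].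
Proof. by move=> E; rewrite -E; apply: reduce_ok. Qed.
End Free.

Lemma Br_part : in_Br_Sigma2 nested_comm.
Proof.
split.
  by case=> [[|[|[|[|[|[|?]]]]]] ?] //; vm_compute.
case=> [[|[|[|[|[|[|?]]]]]] Hi] //; apply: (@reduce_triv _ _ 300); vm_compute; reflexivity.
Qed.

Definition r4 := (Z * Z * Z * Z)%type.
Definition M4 := (r4 * r4 * r4 * r4)%type.
Definition getr (r : r4) (j : nat) : Z :=
  let: (a, b, c, d) := r in
  match j with 0 => a | 1 => b | 2 => c | _ => d end.
Definition getM (m : M4) (i j : nat) : Z :=
  let: (a, b, c, d) := m in
  getr (match i with 0 => a | 1 => b | 2 => c | _ => d end) j.
Definition mkr (f : nat -> Z) : r4 := (f 0%N, f 1%N, f 2%N, f 3%N).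
Definition mkM (f : nat -> nat -> Z) : M4 :=
  (mkr (f 0%N), mkr (f 1%N), mkr (f 2%N), mkr (f 3%N)).
Lemma getM_mk f i j : (i < 4)%N -> (j < 4)%N -> getM (mkM f) i j = f i j.
Proof.
by move=> Hi Hj; case: i Hi => [|[|[|[|i]]]] Hi; case: j Hj => [|[|[|[|j]]]] Hj.
Qed.

Section ZDefs.
Local Open Scope Z_scope.
Definition mulM (A B : M4) : M4 :=
  mkM (fun i j => (getM A i 0%nat * getM B 0%nat j + getM A i 1%nat * getM B 1%nat j +
                   getM A i 2%nat * getM B 2%nat j + getM A i 3%nat * getM B 3%nat j)).
Definition idM : M4 := mkM (fun i j => if (i == j)%nat then 1 else 0).
Definition JZ (i j : nat) : Z :=
  match i, j with
  | 0%nat, 1%nat => 1 | 2%nat, 3%nat => 1 | 1%nat, 0%nat => -1 | 3%nat, 2%nat => -1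
  | _, _ => 0 end.
Definition cZ (j i : nat) : Z :=
  match j, i with
  | 0%nat, 1%nat => 1 | 1%nat, 0%nat => 1 | 2%nat, 1%nat => 1 | 2%nat, 3%nat => -1
  | 3%nat, 2%nat => 1 | 4%nat, 3%nat => 1
  | _, _ => 0 end.
Definition letterM (x : letter 5) : M4 :=
  let c := cZ (val x.1) in
  mkM (fun i j => ((if (i == j)%nat then 1 else 0) +
     (if x.2 then -1 else 1) * (c i * (c 0%nat * JZ j 0%nat + c 1%nat * JZ j 1%nat
        + c 2%nat * JZ j 2%nat + c 3%nat * JZ j 3%nat)))).
Definition foldM (w : word 5) : M4 := foldr (fun x M => mulM (letterM x) M) idM w.

End ZDefs.
Definition toMx (m : M4) : 'M[int]_4 := \matrix_(i, j) int_of_Z (getM m i j).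

Lemma int_of_ZD a b : int_of_Z (a + b)%Z = int_of_Z a + int_of_Z b.
Proof. exact: (rmorphD int_of_Z a b). Qed.
Lemma int_of_ZM a b : int_of_Z (a * b)%Z = int_of_Z a * int_of_Z b.
Proof. exact: (rmorphM int_of_Z a b). Qed.

Lemma toMx_mul A B : toMx (mulM A B) = toMx A *m toMx B.
Proof.
apply/matrixP => i j; rewrite !mxE getM_mk ?ltn_ord // !big_ord_recr big_ord0 /= !mxE.
by rewrite !int_of_ZD !int_of_ZM add0r.
Qed.

Lemma toMx_id : toMx idM = 1%:M.
Proof.
apply/matrixP => i j; rewrite !mxE getM_mk ?ltn_ord //.
by case: i => [[|[|[|[|?]]]] ?]; case: j => [[|[|[|[|?]]]] ?].
Qed.

Lemma toMx_letter x : rho_letter x = toMx (letterM x).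
Proof.
case: x => [[[|[|[|[|[|?]]]]] ?] [|]] //; apply/matrixP => i j;
rewrite /rho_letter /= /transvection_inv /transvection !mxE getM_mk ?ltn_ord //;
rewrite !big_ord_recr big_ord0 /= !mxE;
rewrite !big_ord_recr big_ord0 /= !mxE;
by case: i => [[|[|[|[|?]]]] ?]; case: j => [[|[|[|[|?]]]] ?].
Qed.

Lemma rhoZ_fold w : rhoZ w = toMx (foldM w).
Proof.
elim: w => [|x w IH]; first by rewrite /= toMx_id.
by rewrite /= IH toMx_letter toMx_mul.
Qed.

Lemma mod3 z : (int_of_Z z)%:~R = (int_of_Z (Z.modulo z 3))%:~R :> 'Z_3.
Proof.
rewrite {1}(Z_div_mod_eq_full z 3) int_of_ZD int_of_ZM intrD intrM.
have -> : (int_of_Z 3)%:~R = 0 :> 'Z_3 by apply/eqP; vm_compute.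
by rewrite mul0r add0r.
Qed.

Definition chk3 (m : M4) : bool :=
  all (fun i => all (fun j => Z.eqb (Z.modulo (getM m i j) 3)
     (if i == j then Z.pos xH else Z0)) (iota 0 4)) (iota 0 4).

Lemma chk3_ok : chk3 (foldM nested_comm).
Proof. vm_compute. reflexivity. Qed.

Lemma ent01 : getM (foldM nested_comm) 0 1 = Z.pos 470184984576%positive.
Proof. vm_compute. reflexivity. Qed.

Theorem mainTheorem12 :
  in_Br_Sigma2 nested_comm /\
  rho3 nested_comm = 1%:M /\
  rhoZ nested_comm != 1%:M.
Proof.
split; first exact: Br_part.
split.
  rewrite /rho3 rhoZ_fold; apply/matrixP => i j; rewrite !mxE mod3.
  have := chk3_ok; rewrite /chk3 => /allP/(_ i); rewrite mem_iota ltn_ord => /(_ isT).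
  move=> /allP/(_ j); rewrite mem_iota ltn_ord => /(_ isT) /Z.eqb_eq ->.
  rewrite -[nat_of_ord i == nat_of_ord j]/(i == j).
  by case: (i == j); apply/eqP; vm_compute.
rewrite rhoZ_fold; apply/negP => /eqP/matrixP/(_ 0 1).
rewrite !mxE ent01 => /(congr1 Z_of_int); rewrite int_of_ZK.
by vm_compute.
Qed.
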